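(* Let $K$ be a field (e.g. $K=\mathbb{C}$), let $r\geqslant 0$ be an integer, and let $\{a_0(n)\}_{n\in\mathbb{Z}},\ldots,\{a_r(n)\}_{n\in\mathbb{Z}}$ be arbitrary sequences of elements of $K$. Consider the set $V$ of all sequences $\{x(n)\}_{n\in\mathbb{Z}}$ of elements of $K$ satisfying \[ a_r(n)x(n+r)+\ldots+a_1(n)x(n+1)+a_0(n)x(n)=0\quad\text{for every } n\in\mathbb{Z}; \] $V$ is a $K$-vector space. Then the following are equivalent: (1) $\dim_K V=\infty$; (2) $V$ contains a lacunary sequence.
   Context: For a sequence $\{a(n)\}_{n\in\mathbb{Z}}$, its support is $\operatorname{supp}(\{a(n)\})=\{i\in\mathbb{Z}\mid a(i)\neq 0\}$. Two elements $i<j$ of the support are called consecutive if there is no $k$ in the support with $i<k<j$. A sequence is called lacunary if the differences $j-i$ between consecutive elements $i<j$ of its support can be arbitrarily large, i.e. for every $N$ there exist consecutive elements $i<j$ of the support with $j-i>N$. *)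

(* Defs.v *)
From HB Require Import structures.
From mathcomp Require Import all_boot all_order all_algebra.
Set Implicit Arguments. Unset Strict Implicit. Unset Printing Implicit Defensive.
Import Order.TTheory GRing.Theory Num.Theory.
Local Open Scope ring_scope.

Definition solves (K : fieldType) (r : nat) (a : 'I_r.+1 -> int -> K)
  (x : int -> K) : Prop :=
  forall n : int, \sum_(i < r.+1) a i n * x (n + (i : nat)%:Z) = 0.

Definition consecutive_supp (K : fieldType) (x : int -> K) (i j : int) : Prop :=
  [/\ i < j, x i != 0, x j != 0 & forall k : int, i < k < j -> x k = 0].

Definition lacunary (K : fieldType) (x : int -> K) : Prop :=
  forall N : nat, exists i j : int,
    consecutive_supp x i j /\ N%:Z < j - i.

Definition lin_indep (K : fieldType) (m : nat) (f : 'I_m -> int -> K) : Prop :=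
  forall c : 'I_m -> K,
    (forall n : int, \sum_(k < m) c k * f k n = 0) -> forall k, c k = 0.

(* dim_K V = infinity, for V = the solution space: V contains linearly
   independent families of every finite size. *)
Definition infinite_dim_solutions (K : fieldType) (r : nat)
  (a : 'I_r.+1 -> int -> K) : Prop :=
  forall m : nat, exists f : 'I_m -> int -> K,
    (forall k, solves a (f k)) /\ lin_indep f.

(* Main.v *)
Require Import Defs.
From HB Require Import structures.
From mathcomp Require Import all_boot all_order all_algebra.
From mathcomp Require Import zify.
From Stdlib Require Import Classical IndefiniteDescription.
Set Implicit Arguments. Unset Strict Implicit. Unset Printing Implicit Defensive.
Import Order.TTheory GRing.Theory Num.Theory.
Local Open Scope ring_scope.

Lemma solves_lin (K : fieldType) (r : nat) (a : 'I_r.+1 -> int -> K) (m : nat)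
  (c : nat -> K) (F : nat -> int -> K) :
  (forall k, (k < m)%N -> solves a (F k)) ->
  solves a (fun n => \sum_(k < m) c k * F k n).
Proof.
move=> H n; under eq_bigr do rewrite big_distrr.
rewrite exchange_big big1 // => k _.
rewrite /=; transitivity (c k * \sum_(i < r.+1) a i n * F k (n + (i : nat)%:Z)).
  by rewrite big_distrr; apply: eq_bigr => i _ /=; rewrite mulrCA.
by rewrite (H k (ltn_ord k) n) mulr0.
Qed.

Lemma solves_trunc (K : fieldType) (r : nat) (a : 'I_r.+1 -> int -> K)
  (y : int -> K) (P : int -> bool) : solves a y ->
  (forall n, (forall l, (l <= r)%N -> P (n + l%:Z) \/ y (n + l%:Z) = 0) \/
             (forall l, (l <= r)%N -> ~~ P (n + l%:Z))) ->
  solves a (fun n => if P n then y n else 0).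
Proof.
move=> Hy HP n; case: (HP n) => H.
  rewrite -[RHS](Hy n); apply: eq_bigr => i _.
  have [Pn|yn] := H i (ltn_ord i); first by rewrite Pn.
  by case: ifP; rewrite ?yn.
by apply: big1 => i _; rewrite (negbTE (H i (ltn_ord i))) mulr0.
Qed.

Lemma left_supp (K : fieldType) (x : int -> K) (d : nat) : forall s a : int,
  a - s = d%:Z -> x s != 0 ->
  exists i, [/\ s <= i, i <= a, x i != 0 & forall n, i < n <= a -> x n = 0].
Proof.
elim: d => [|d IH] s a E xs.
  have Ea : a = s by lia.
  exists s; split=> //; first by rewrite Ea.
  by move=> n /andP[h1 h2]; exfalso; lia.
case: (eqVneq (x a) 0) => xa; last first.
  by exists a; split=> //; [lia | move=> n /andP[h1 h2]; exfalso; lia].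
have [i [h1 h2 h3 h4]] := IH s (a - 1) ltac:(lia) xs.
exists i; split=> //; first lia.
move=> n /andP[h5 h6]; case: (eqVneq n a) => [->//|na].
by apply: h4; apply/andP; split=> //; lia.
Qed.

Lemma right_supp (K : fieldType) (x : int -> K) (d : nat) : forall b t : int,
  t - b = d%:Z -> x t != 0 ->
  exists j, [/\ b <= j, j <= t, x j != 0 & forall n, b <= n < j -> x n = 0].
Proof.
elim: d => [|d IH] b t E xt.
  have Eb : b = t by lia.
  exists t; split=> //; first by rewrite Eb.
  by move=> n /andP[h1 h2]; exfalso; lia.
case: (eqVneq (x b) 0) => xb; last first.
  by exists b; split=> //; [lia | move=> n /andP[h1 h2]; exfalso; lia].
have [j [h1 h2 h3 h4]] := IH (b + 1) t ltac:(lia) xt.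
exists j; split=> //; first lia.
move=> n /andP[h5 h6]; case: (eqVneq n b) => [->//|nb].
by apply: h4; apply/andP; split=> //; lia.
Qed.

Lemma gap_consec (K : fieldType) (x : int -> K) (a b s t : int) :
  s <= a -> b <= t -> a < b -> x s != 0 -> x t != 0 ->
  (forall n, a < n < b -> x n = 0) ->
  exists i j, consecutive_supp x i j /\ b - a <= j - i.
Proof.
move=> sa bt ab xs xt Hz.
have [i [i1 i2 i3 i4]] := @left_supp K x `|a - s|%N s a ltac:(lia) xs.
have [j [j1 j2 j3 j4]] := @right_supp K x `|t - b|%N b t ltac:(lia) xt.
exists i, j; split; last lia.
split=> //; first lia.
move=> k /andP[k1 k2].
case: (lerP k a) => ka; first by apply: i4; apply/andP; split.
case: (ltrP k b) => kb; first by apply: Hz; apply/andP; split.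
by apply: j4; apply/andP; split.
Qed.

Definition indep_on (K : fieldType) (P : int -> Prop) (m : nat)
  (F : nat -> int -> K) :=
  forall c : nat -> K, (forall n, P n -> \sum_(k < m) c k * F k n = 0) ->
  forall k, (k < m)%N -> c k = 0.

Lemma sumS (K : fieldType) (m : nat) (c : nat -> K) (F : nat -> int -> K) n :
  \sum_(k < m.+1) c k * F k n = \sum_(k < m) c k * F k n + c m * F m n.
Proof. by rewrite big_ord_recr. Qed.

Lemma indep_mono (K : fieldType) (P Q : int -> Prop) m (F : nat -> int -> K) :
  indep_on P m F -> (forall n, P n -> Q n) -> indep_on Q m F.
Proof. by move=> H PQ c Hc; apply: H => n /PQ; apply: Hc. Qed.

Lemma indep_restr (K : fieldType) (P : int -> Prop) m (F : nat -> int -> K) :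
  indep_on P m.+1 F -> indep_on P m F.
Proof.
move=> H c Hc k km.
pose c' := fun k => if k == m then 0 else c k.
have Ec : forall n, \sum_(k < m) c' k * F k n = \sum_(k < m) c k * F k n.
  move=> n; apply: eq_bigr => i _; rewrite /c'.
  by rewrite ifF //; apply/negbTE; rewrite neq_ltn ltn_ord.
have ck : c' k = c k by rewrite /c' ifF //; apply/negbTE; rewrite neq_ltn km.
rewrite -ck; apply: (H c' _ k (ltnW km)) => n Pn.
by rewrite sumS Ec Hc // /c' eqxx mul0r addr0.
Qed.

Lemma indep_window (K : fieldType) m (F : nat -> int -> K) :
  indep_on (fun _ => True) m F ->
  exists T : nat, indep_on (fun n => (`|n| <= T)%N) m F.
Proof.
elim: m => [|m IH] Hind; first by exists 0%N => c _ k.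
have [T0 H0] := IH (indep_restr Hind).
case: (classic (indep_on (fun n => (`|n| <= T0)%N) m.+1 F)) => [H|H].
  by exists T0.
move: H; rewrite /indep_on => /not_all_ex_not [c Hcc].
have [Hc Hk] := imply_to_and _ _ Hcc.
have [k0 Hk0] := not_all_ex_not _ _ Hk.
have [k0m ck0] := imply_to_and _ _ Hk0.
have cm : c m != 0.
  apply/negP => /eqP cm0; apply: ck0.
  have Hc' : forall k, (k < m)%N -> c k = 0.
    apply: H0 => n Pn; move: (Hc n Pn) => /=; rewrite sumS cm0 mul0r addr0; apply.
  move: k0m; rewrite ltnS leq_eqVlt => /orP[/eqP ->//|]; exact: Hc'.
pose d := fun k => c k / c m.
pose h := fun n => \sum_(k < m.+1) d k * F k n.
have hE : forall n, h n = (\sum_(k < m.+1) c k * F k n) / c m.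
  by move=> n; rewrite /h mulr_suml; apply: eq_bigr => i _; rewrite /d mulrAC.
have hz : forall n, (`|n| <= T0)%N -> h n = 0.
  by move=> n Pn; rewrite hE Hc // mul0r.
have dm : d m = 1 by rewrite /d divff.
have [p hp] : exists p, h p != 0.
  apply: NNPP => /not_ex_all_not Hp.
  have Hp' : forall n, True -> h n = 0.
    by move=> n _; case: (eqVneq (h n) 0) => // hn; case: (Hp n hn).
  have := Hind d Hp' m (ltnSn m).
  by rewrite dm => /eqP; rewrite oner_eq0.
exists (maxn T0 `|p|) => e He.
pose e' := fun k => e k - e m * d k.
have Se' : forall n, \sum_(k < m.+1) e' k * F k n =
    \sum_(k < m.+1) e k * F k n - e m * h n.
  move=> n; rewrite /h mulr_sumr -sumrB; apply: eq_bigr => i _.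
  by rewrite /e' mulrBl mulrA.
have e'm : e' m = 0 by rewrite /e' dm mulr1 subrr.
have Se'2 : forall n, \sum_(k < m.+1) e' k * F k n = \sum_(k < m) e' k * F k n.
  by move=> n; rewrite sumS e'm mul0r addr0.
have e'0 : forall k, (k < m)%N -> e' k = 0.
  apply: H0 => n Pn; rewrite -Se'2 Se' He ?hz // ?mulr0 ?subrr //.
  by rewrite leq_max Pn.
have em : e m = 0.
  have : \sum_(k < m.+1) e' k * F k p = 0.
    apply: big1 => i _; move: (ltn_ord i); rewrite ltnS leq_eqVlt.
    by case/orP=> [/eqP ->|/e'0 ->]; rewrite ?e'm mul0r.
  rewrite Se' He; last by rewrite leq_max leqnn orbT.
  rewrite sub0r => /eqP; rewrite oppr_eq0 mulf_eq0 (negbTE hp) orbF.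
  by move/eqP.
move=> k; rewrite ltnS leq_eqVlt => /orP[/eqP ->//|km].
by have := e'0 k km; rewrite /e' em mul0r subr0.
Qed.

Lemma dep_exists (K : fieldType) m (F : nat -> int -> K) (P : seq int) :
  (size P < m)%N ->
  exists c : nat -> K, (exists k, (k < m)%N /\ c k != 0) /\
    forall p, p \in P -> \sum_(k < m) c k * F k p = 0.
Proof.
move=> Pm.
pose A : 'M[K]_(m, size P) := \matrix_(k, j) F k (nth 0 P j).
have rk : (0 < \rank (kermx A))%N.
  by rewrite mxrank_ker; have := rank_leq_col A; lia.
have [i ri] : exists i, row i (kermx A) != 0.
  apply: NNPP => /not_ex_all_not H.
  have K0 : kermx A = 0.
    apply/row_matrixP => i; rewrite row0.
    by case: (eqVneq (row i (kermx A)) 0) => // hn; case: (H i hn).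
  by move: rk; rewrite K0 mxrank0.
pose u := row i (kermx A).
have uA : u *m A = 0 by rewrite -row_mul mulmx_ker row0.
pose c := fun k : nat => if (insub k : option 'I_m) is Some j then u 0 j else 0.
have cE : forall j : 'I_m, c j = u 0 j by move=> j; rewrite /c valK.
exists c; split.
  apply: NNPP => /not_ex_all_not H; move/eqP: ri; apply; apply/rowP => j.
  rewrite [RHS]mxE; have := cE j; rewrite /u mxE => <-.
  case: (eqVneq (c j) 0) => // hn; case: (H j); split=> //.
move=> p pP.
have := congr1 (fun M : 'M[K]_(1, size P) => M 0 (Ordinal (etrans (@index_mem _ p P) pP))) uA.
rewrite !mxE => E; rewrite -[RHS]E; apply: eq_bigr => k _.
rewrite cE; congr (_ * _); by rewrite mxE /= (nth_index 0 pP).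
Qed.

Lemma key (K : fieldType) (r : nat) (a : 'I_r.+1 -> int -> K) :
  infinite_dim_solutions a -> forall L : nat, exists z : int -> K,
  solves a z /\ exists M : nat, (exists s, z s != 0) /\
    forall n, z n != 0 -> (L <= `|n| <= M)%N.
Proof.
move=> Hinf L.
pose m := (2 * L + 2 * r + 1)%N.
have [f [fs fi]] := Hinf m.
pose F := fun k : nat =>
  if (insub k : option 'I_m) is Some j then f j else (fun _ => 0).
have FE : forall j : 'I_m, F j = f j by move=> j; rewrite /F valK.
have Fs : forall k, (k < m)%N -> solves a (F k).
  by move=> k km; have := FE (Ordinal km) => /= ->.
have Hind : indep_on (fun _ => True) m F.
  move=> c Hc k km.
  have := fi (fun j => c j) _ (Ordinal km); apply => n.
  by rewrite -[RHS](Hc n I); apply: eq_bigr => j _; rewrite FE.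
have [T0 HT0] := indep_window Hind.
pose T := (T0 + L)%N.
have HT : indep_on (fun n => (`|n| <= T)%N) m F.
  by apply: (indep_mono HT0) => n; rewrite /T; lia.
pose P := [seq (k%:Z) | k <- iota 0 L] ++ [seq - (k%:Z) | k <- iota 0 L] ++
  [seq ((T + 1 + k)%N%:Z) | k <- iota 0 r] ++
  [seq - ((T + 1 + k)%N%:Z) | k <- iota 0 r].
have Psz : (size P < m)%N by rewrite !size_cat !size_map !size_iota /m; lia.
have [c [[k0 [k0m ck0]] Hc]] := dep_exists F Psz.
pose y := fun n => \sum_(k < m) c k * F k n.
have ys : solves a y := solves_lin c Fs.
have hW : forall n, (`|n| < L)%N -> y n = 0.
  move=> n nL; apply: Hc; rewrite !mem_cat; apply/or4P.
  case: (lerP 0 n) => n0.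
    by apply: Or41; apply/mapP; exists `|n|%N; [rewrite mem_iota; lia | lia].
  by apply: Or42; apply/mapP; exists `|n|%N; [rewrite mem_iota; lia | lia].
have hB : forall n, (T < `|n| <= T + r)%N -> y n = 0.
  move=> n /andP[n1 n2]; apply: Hc; rewrite !mem_cat; apply/or4P.
  case: (lerP 0 n) => n0.
    apply: Or43; apply/mapP; exists (`|n| - T - 1)%N;
      [rewrite mem_iota; lia | lia].
  apply: Or44; apply/mapP; exists (`|n| - T - 1)%N;
    [rewrite mem_iota; lia | lia].
have [s [sT ysn]] : exists s, (`|s| <= T)%N /\ y s != 0.
  apply: NNPP => /not_ex_all_not H; move/eqP: ck0; apply.
  apply: (HT c _ k0 k0m) => n nT.
  case: (eqVneq (y n) 0) => // hn; case: (H n); split=> //.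
pose z := fun n => if (`|n| <= T)%N then y n else 0.
have zs : solves a z.
  apply: solves_trunc => // n.
  case: (lerP (- (T + r)%N%:Z) n) => h1; [case: (lerP n T%:Z) => h2|].
  - left => l lr; case: (leqP `|n + l%:Z| T) => h; first by left.
    by right; apply: hB; apply/andP; split=> //; lia.
  - by right => l lr; rewrite -ltnNge; lia.
  - by right => l lr; rewrite -ltnNge; lia.
exists z; split=> //; exists T; split.
  by exists s; rewrite /z sT.
move=> n; rewrite /z; case: ifP => hT yn; last by rewrite eqxx in yn.
apply/andP; split=> //.
rewrite leqNgt; apply/negP => hL; move: yn; by rewrite (hW n hL) eqxx.
Qed.

Lemma inf_to_lac (K : fieldType) (r : nat) (a : 'I_r.+1 -> int -> K) :
  infinite_dim_solutions a -> exists x, solves a x /\ lacunary x.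
Proof.
move=> Hinf.
have H := key Hinf.
have C : forall L : nat, {p : (int -> K) * nat | solves a p.1 /\
    (exists s, p.1 s != 0) /\ forall n, p.1 n != 0 -> (L <= `|n| <= p.2)%N}.
  move=> L; apply: constructive_indefinite_description.
  by have [z [zs [M [hs hn]]]] := H L; exists (z, M).
pose Z := fun L => (sval (C L)).1.
pose Mf := fun L => (sval (C L)).2.
have ZP : forall L, solves a (Z L) /\ (exists s, Z L s != 0) /\
    forall n, Z L n != 0 -> (L <= `|n| <= Mf L)%N.
  by move=> L; exact: (svalP (C L)).
pose Ls := fix Ls k := if k is k'.+1 then (Mf (Ls k') + k' + 2)%N else 0%N.
pose z := fun k => Z (Ls k).
pose M := fun k => Mf (Ls k).
have Lstep : forall k, Ls k.+1 = (M k + k + 2)%N by [].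
have zs : forall k, solves a (z k) by move=> k; case: (ZP (Ls k)).
have zsupp : forall k n, z k n != 0 -> (Ls k <= `|n| <= M k)%N.
  by move=> k; case: (ZP (Ls k)) => _ [].
have zne : forall k, exists s, z k s != 0.
  by move=> k; case: (ZP (Ls k)) => _ [].
have LM : forall k, (Ls k <= M k)%N.
  by move=> k; have [s hs] := zne k; have := zsupp k s hs; lia.
have Lk : forall k, (k <= Ls k)%N.
  by elim=> // k IH; rewrite Lstep; have := LM k; lia.
have ML : forall j k, (j < k)%N -> (M j < Ls k)%N.
  move=> j; elim=> // k IH jk; rewrite Lstep.
  case: (ltngtP j k) => h.
  - by have := IH h; have := LM k; lia.
  - by exfalso; lia.
  - by rewrite h; lia.
have Lmono : forall j k, (j <= k)%N -> (Ls j <= Ls k)%N.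
  move=> j k; rewrite leq_eqVlt => /orP[/eqP->//|h].
  by have := ML j k h; have := LM j; lia.
have Mmono : forall j k, (j <= k)%N -> (M j <= M k)%N.
  move=> j k; rewrite leq_eqVlt => /orP[/eqP->//|h].
  by have := ML j k h; have := LM k; lia.
pose x := fun n : int => \sum_(k < `|n|.+1) z k n.
have xE : forall n B, (`|n| < B)%N -> x n = \sum_(k < B) z k n.
  move=> n B nB; rewrite /x (big_ord_widen B (fun k => z k n) nB) big_mkcond.
  apply: eq_bigr => i _; case: ifP => // hi.
  case: (eqVneq (z i n) 0) => // zn; exfalso.
  have := zsupp _ _ zn; have := Lk i; move: hi; rewrite ltnS => /negbT.
  rewrite -ltnNge; lia.
have xs : solves a x.
  move=> n.
  have Hs := @solves_lin K r a (`|n| + r + 1)%N (fun _ => 1) z (fun k _ => zs k) n.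
  rewrite -[RHS]Hs; apply: eq_bigr => i _; congr (_ * _).
  rewrite (xE _ (`|n| + r + 1)%N); last by have := ltn_ord i; lia.
  by apply: eq_bigr => k _; rewrite mul1r.
have x_at : forall k n, (Ls k <= `|n| <= M k)%N -> x n = z k n.
  move=> k n hn.
  have kn : (k < `|n|.+1)%N by have := Lk k; lia.
  rewrite (xE n `|n|.+1) // (bigD1 (Ordinal kn)) //= big1 ?addr0 // => j jk.
  case: (eqVneq (z j n) 0) => // zn; exfalso.
  have jk' : (j : nat) != k by apply: contra jk => /eqP e; apply/eqP/val_inj.
  have := zsupp _ _ zn; case: (ltngtP j k) jk' => h //= _.
  - by have := ML _ _ h; lia.
  - by have := ML _ _ h; lia.
have x_gap : forall k n, (M k < `|n| < Ls k.+1)%N -> x n = 0.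
  move=> k n hn; rewrite (xE n `|n|.+1) // big1 // => j _.
  case: (eqVneq (z j n) 0) => // zn; exfalso.
  have := zsupp _ _ zn; case: (leqP j k) => h.
  - by have := Mmono _ _ h; lia.
  - by have := Lmono _ _ h; lia.
exists x; split=> // N.
have [s1 hs1] := zne N; have [s2 hs2] := zne N.+1.
have b1 := zsupp _ _ hs1; have b2 := zsupp _ _ hs2.
have x1 : x s1 != 0 by rewrite (x_at N).
have x2 : x s2 != 0 by rewrite (x_at N.+1).
have LS := Lstep N.
case: (lerP 0 s2) => s2p.
  have [i [j [cij hij]]] := @gap_consec K x (M N)%:Z (Ls N.+1)%:Z s1 s2
    ltac:(lia) ltac:(lia) ltac:(lia) x1 x2
    (fun n hn => x_gap N n ltac:(move: hn => /andP[h1 h2]; lia)).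
  by exists i, j; split=> //; lia.
have [i [j [cij hij]]] := @gap_consec K x (- (Ls N.+1)%:Z) (- (M N)%:Z) s2 s1
  ltac:(lia) ltac:(lia) ltac:(lia) x2 x1
  (fun n hn => x_gap N n ltac:(move: hn => /andP[h1 h2]; lia)).
by exists i, j; split=> //; lia.
Qed.

Lemma seq_max (T : eqType) (s : seq T) (g : T -> int) :
  s != [::] -> exists2 k, k \in s & forall l, l \in s -> g l <= g k.
Proof.
elim: s => // y s IH _.
case: (eqVneq s [::]) => [->|sn].
  by exists y; rewrite ?mem_seq1 // => l; rewrite mem_seq1 => /eqP->.
have [k ks Hk] := IH sn.
case: (lerP (g y) (g k)) => h.
  exists k; first by rewrite in_cons ks orbT.
  by move=> l; rewrite in_cons => /orP[/eqP->//|/Hk].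
exists y; first by rewrite in_cons eqxx.
move=> l; rewrite in_cons => /orP[/eqP->//|/Hk hl].
by apply: (le_trans hl); apply: ltW.
Qed.

Lemma consec_uniq (K : fieldType) (x : int -> K) i j j' :
  consecutive_supp x i j -> consecutive_supp x i j' -> j = j'.
Proof.
move=> [h1 h2 h3 h4] [h1' h2' h3' h4'].
case: (ltgtP j j') => // h.
- by move/eqP: h3; case; apply: h4'; apply/andP; split.
- by move/eqP: h3'; case; apply: h4; apply/andP; split.
Qed.

Lemma lac_to_inf (K : fieldType) (r : nat) (a : 'I_r.+1 -> int -> K)
  (x : int -> K) : solves a x -> lacunary x -> infinite_dim_solutions a.
Proof.
move=> xs xl.
have G : forall N : nat, {p : int * int | consecutive_supp x p.1 p.2 /\
    N%:Z < p.2 - p.1}.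
  move=> N; apply: constructive_indefinite_description.
  by have [i [j hij]] := xl N; exists (i, j).
pose Ns := fix Ns k := if k is k'.+1 then
  `|(sval (G (Ns k'))).2 - (sval (G (Ns k'))).1|%N else r.
pose I := fun k => (sval (G (Ns k))).1.
pose J := fun k => (sval (G (Ns k))).2.
have GP : forall k, consecutive_supp x (I k) (J k) /\ (Ns k)%:Z < J k - I k.
  by move=> k; exact: (svalP (G (Ns k))).
have Nstep : forall k, Ns k.+1 = `|J k - I k|%N by [].
have Nr : forall k, (r <= Ns k)%N.
  elim=> // k IH; rewrite Nstep; have [_ h] := GP k; lia.
have Dinc : forall j k, (j < k)%N -> J j - I j < J k - I k.
  move=> j; elim=> // k IH jk.
  have [_ h] := GP k.+1; rewrite Nstep in h.
  case: (ltngtP j k) => h'.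
  - by have := IH h'; have [_ h2] := GP k; lia.
  - by exfalso; lia.
  - by rewrite h'; have [_ h2] := GP k; lia.
have Idist : forall j k, j != k -> I j != I k.
  move=> j k jk; apply/negP => /eqP e.
  have [c1 _] := GP j; have [c2 _] := GP k.
  rewrite e in c1; have ej := consec_uniq c1 c2.
  case: (ltngtP j k) jk => h //= _.
  - by have := Dinc _ _ h; rewrite ej e; lia.
  - by have := Dinc _ _ h; rewrite ej e; lia.
pose f := fun k n => if n <= I k then x n else 0.
have fs : forall k, solves a (f k).
  move=> k; apply: solves_trunc => // n.
  have [[c1 c2 c3 c4] h] := GP k; have := Nr k => hr.
  case: (ltrP (n + r%:Z) (J k)) => hn.
  - left => l lr; case: (lerP (n + l%:Z) (I k)) => h'; first by left.
    by right; apply: c4; apply/andP; split=> //; lia.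
  - by right => l lr; rewrite -ltNge; lia.
move=> m; exists (fun k : 'I_m => f k); split; first by move=> k; apply: fs.
move=> c Hc k0; apply: NNPP => ck0.
pose S := [seq k <- enum 'I_m | c k != 0].
have k0S : k0 \in S by rewrite mem_filter mem_enum andbT; apply/eqP.
have [km kmS Hkm] := @seq_max _ S (fun k : 'I_m => I k)
  ltac:(by apply/eqP => E; rewrite E in k0S).
move: (kmS); rewrite mem_filter mem_enum andbT => ckm.
have := Hc (I km).
rewrite (bigD1 km) //= big1; last first.
  move=> k kk; case: (eqVneq (c k) 0) => [->|ck]; first by rewrite mul0r.
  have kS : k \in S by rewrite mem_filter mem_enum andbT.
  have le := Hkm k kS.
  have ne : I k != I km.
    by apply: Idist; apply: contra kk => /eqP e; apply/eqP/val_inj.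
  rewrite /f ifF ?mulr0 //; apply/negbTE; rewrite -ltNge.
  by rewrite lt_neqAle ne le.
rewrite addr0 /f lexx => /eqP; rewrite mulf_eq0 (negbTE ckm) /=.
by have [[_ h _ _] _] := GP km; rewrite (negbTE h).
Qed.

Theorem theorem1 (K : fieldType) (r : nat) (a : 'I_r.+1 -> int -> K) :
  infinite_dim_solutions a <-> (exists x : int -> K, solves a x /\ lacunary x).
Proof.
split; first exact: inf_to_lac.
by move=> [x [xs xl]]; exact: (lac_to_inf xs xl).
Qed.
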